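(* Let $H=(h_{ij})=(N^{-1/2}x_{ij})$ be a generalized symmetric Wigner matrix such that, for some constant $C_1>0$ and all $1\le i<j\le N$, $\mathbb{E}|h_{ii}|^2\le C_1/N$, $\mathbb{E}|h_{ij}|^2=1/N$, $\mathbb{E}|h_{ij}|^3\le C_1N^{-3/2}$, $\mathbb{E}|h_{ij}|^4\le C_1(\log N)N^{-2}$, and $H$ satisfies the bounded support condition with $q=N^{\phi}$ for some constant $\phi>0$. Then there exists another generalized symmetric Wigner matrix $\widetilde H=(N^{-1/2}\widetilde x_{ij})$ satisfying the bounded support condition with some $q\ge cN^{1/2}/\log N$ ($c>0$ a constant), such that $$\mathbb{E}x_{ij}^k=\mathbb{E}\widetilde x_{ij}^k\quad(i\ne j,\ k=1,2,3,4),\qquad \mathbb{E}x_{ii}^k=\mathbb{E}\widetilde x_{ii}^k\quad(k=1,2).$$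
   Context: A generalized symmetric Wigner matrix of size $N$ is a real symmetric matrix $H=(h_{ij})$ whose upper-triangular entries are independent real centered random variables (distributions may depend on $i,j,N$) with $|\mathbb{E}h_{ij}^2-N^{-1}|\le C_0N^{-1}\delta_{ij}$ for a constant $C_0$. The bounded support condition with $q$: for all $i,j$, $|h_{ij}|\le q^{-1}$ with probability at least $1-e^{-N^c}$ for some constant $c>0$. *)

(* Defs.v *)
From HB Require Import structures.
From mathcomp Require Import all_boot all_order all_algebra.
From mathcomp Require Import all_classical all_reals all_analysis.
Set Implicit Arguments. Unset Strict Implicit. Unset Printing Implicit Defensive.
Import Order.TTheory GRing.Theory Num.Theory.
Local Open Scope classical_set_scope.
Local Open Scope ring_scope.

(* A (sequence of) symmetric random matrices with independent upper-triangular
   entries is described, up to law, by the laws of its entries: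
   [mu N i j] is the law (a probability measure on R) of the entry h_ij of the
   N x N matrix H_N.  Symmetry h_ij = h_ji is reflected by mu N i j = mu N j i. *)
Definition entry_laws (R : realType) :=
  forall N : nat, 'I_N -> 'I_N -> probability R R.

Definition gen_wigner (R : realType) (mu : entry_laws R) : Prop :=
  (forall N i j, mu N i j = mu N j i) /\
  exists C0 : R, 0 <= C0 /\
    forall N (i j : 'I_N),
      (mu N i j).-integrable setT (fun x : R => x%:E) /\
      (\int[mu N i j]_x (x%:E) = 0)%E /\
      (`| \int[mu N i j]_x ((x ^+ 2)%:E) - (N%:R^-1)%:E | <=
         (C0 * N%:R^-1 * (i == j)%:R)%:E)%E.

Definition bounded_support (R : realType) (mu : entry_laws R) (q : nat -> R)
  : Prop :=
  exists c : R, 0 < c /\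
    forall N (i j : 'I_N),
      ((1 - expR (- (N%:R `^ c)))%:E <= mu N i j [set x : R | (`|x| <= (q N)^-1)%R])%E.

Definition xmoment (R : realType) (mu : entry_laws R) N (i j : 'I_N) (k : nat)
  : \bar R :=
  (\int[mu N i j]_x (((Num.sqrt N%:R * x) ^+ k)%:E))%E.

(* Main.v *)
Require Import Defs.
From HB Require Import structures.
From mathcomp Require Import all_boot all_order all_algebra.
From mathcomp Require Import all_classical all_reals all_analysis.
From mathcomp Require Import measurable_realfun.
From mathcomp Require Import ring lra zify.
Import Order.TTheory GRing.Theory Num.Theory.
Local Open Scope ring_scope.
Local Open Scope classical_set_scope.

Section P3.
Context {R : realType} (w0 wa wb a b : R).
Definition valid3 : bool := [&& 0 <= w0, 0 <= wa, 0 <= wb & w0 + wa + wb == 1].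
Definition W0 := if valid3 then w0 else 1.
Definition WA := if valid3 then wa else 0.
Definition WB := if valid3 then wb else 0.
Lemma W0_ge0 : 0 <= W0. Proof. by rewrite /W0; case: ifP => // /and4P[]. Qed.
Lemma WA_ge0 : 0 <= WA. Proof. by rewrite /WA; case: ifP => // /and4P[]. Qed.
Lemma WB_ge0 : 0 <= WB. Proof. by rewrite /WB; case: ifP => // /and4P[]. Qed.
Lemma W_sum : W0 + WA + WB = 1.
Proof. by rewrite /W0 /WA /WB; case: ifP => [/and4P[_ _ _ /eqP]|] // _; rewrite !addr0. Qed.

Definition pm3 : set R -> \bar R := measure_add (mscale (NngNum W0_ge0) (@dirac _ R 0 R))
  (measure_add (mscale (NngNum WA_ge0) (@dirac _ R a R)) (mscale (NngNum WB_ge0) (@dirac _ R (-b) R))).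
HB.instance Definition _ := Measure.on pm3.
Lemma pm3E A : pm3 A = (W0%:E * \d_(0%R : R) A + (WA%:E * \d_a A + WB%:E * \d_(- b)%R A))%E.
Proof. rewrite /pm3 measure_addE. rewrite [X in (_ + X)%E]measure_addE. by []. Qed.
Let pm3_setT : pm3 setT = 1%E.
Proof. by rewrite pm3E !diracT !mule1 -!EFinD addrA W_sum. Qed.
HB.instance Definition _ := @Measure_isProbability.Build _ _ R pm3 pm3_setT.

Lemma ge0_int_pm3 (g : R -> \bar R) : measurable_fun setT g -> (forall x, 0 <= g x)%E ->
  (\int[pm3]_x g x = W0%:E * g 0%R + (WA%:E * g a + WB%:E * g (- b)%R))%E.
Proof.
move=> mg g0.
have g0' : forall x, setT x -> (0 <= g x)%E by move=> x _; exact: g0.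
rewrite /pm3 (ge0_integral_measure_add _ _ _ g0' mg)//.
rewrite (ge0_integral_measure_add _ _ _ g0' mg)//.
by rewrite !ge0_integral_mscale//= !integral_dirac//= !diracT !mul1e.
Qed.

Lemma int_pm3 (f : R -> R) : measurable_fun setT f ->
  (\int[pm3]_x (f x)%:E = (W0 * f 0 + (WA * f a + WB * f (- b)))%:E)%E.
Proof.
move=> mf.
have mfE : measurable_fun setT (fun x => (f x)%:E) by exact/measurable_EFinP.
rewrite integralE.
have -> : (fun x : R => ((fun y : R => (f y)%:E)^\+)%E x) = (fun x => (Num.max (f x) 0)%:E).
  by apply/funext => x; rewrite funeposE /= -EFin_max.
have -> : (fun x : R => ((fun y : R => (f y)%:E)^\-)%E x) = (fun x => (Num.max (- f x) 0)%:E).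
  by apply/funext => x; rewrite funenegE /= -EFin_max.
have m1 : measurable_fun setT (fun x => (Num.max (f x) 0)%:E).
  by apply/measurable_EFinP; apply: measurable_maxr.
have m2 : measurable_fun setT (fun x => (Num.max (- f x) 0)%:E).
  apply/measurable_EFinP; apply: measurable_maxr => //; exact: measurableT_comp.
rewrite (ge0_int_pm3 _ m1); last by move=> x; rewrite lee_fin le_max lexx orbT.
rewrite (ge0_int_pm3 _ m2); last by move=> x; rewrite lee_fin le_max lexx orbT.
rewrite -!EFinM -!EFinD; congr EFin.
have mm (y : R) : Num.max y 0 - Num.max (- y) 0 = y.
  by rewrite !maxr_absE !subr0 normrN; field.
by rewrite -[in RHS](mm (f 0)) -[in RHS](mm (f a)) -[in RHS](mm (f (- b))); ring.
Qed.
End P3.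
Section Mom.
Context {R : realType}.
Local Open Scope ring_scope.

Definition mom (P : probability R R) (k : nat) : R := fine (\int[P]_x (x ^+ k)%:E)%E.

Lemma mX (k : nat) : measurable_fun setT (fun x : R => (x ^+ k)%:E).
Proof. by apply/measurable_EFinP; apply: measurable_funX. Qed.

Lemma int_of_abs (P : probability R R) k :
  (\int[P]_x ((`|x| ^+ k)%:E) < +oo)%E -> P.-integrable setT (fun x : R => (x ^+ k)%:E).
Proof.
move=> h; apply/integrableP; split; first exact: mX.
by under eq_integral do rewrite abse_EFin normrX.
Qed.

Lemma momE (P : probability R R) k : P.-integrable setT (fun x : R => (x ^+ k)%:E) ->
  (\int[P]_x (x ^+ k)%:E)%E = (mom P k)%:E.
Proof. by move=> h; rewrite /mom fineK // (integrable_fin_num _ h). Qed.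

Lemma intD_mon (P : probability R R) (f : R -> R) c k :
  P.-integrable setT (fun x => (f x)%:E) -> P.-integrable setT (fun x : R => (x ^+ k)%:E) ->
  P.-integrable setT (fun x => (f x + c * x ^+ k)%:E) /\
  (\int[P]_x ((f x + c * x ^+ k)%:E) = \int[P]_x (f x)%:E + (c * mom P k)%:E)%E.
Proof.
move=> hf hk.
have hk' := integrableZl measurableT c hk.
have e : (fun x => (f x + c * x ^+ k)%:E) = ((fun x => (f x)%:E) \+ (fun x => c%:E * (x ^+ k)%:E))%E.
  by apply/funext => x; rewrite /= EFinD EFinM.
rewrite e; split; first exact: integrableD.
by rewrite integralD // integralZl // momE // EFinM.
Qed.

Lemma int_poly4 (P : probability R R) (c0 c1 c2 c3 c4 : R) :
  (forall k, (1 <= k <= 4)%N -> P.-integrable setT (fun x : R => (x ^+ k)%:E)) ->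
  (\int[P]_x ((c0 + c1 * x ^+ 1 + c2 * x ^+ 2 + c3 * x ^+ 3 + c4 * x ^+ 4)%:E))%E =
  (c0 + c1 * mom P 1 + c2 * mom P 2 + c3 * mom P 3 + c4 * mom P 4)%:E.
Proof.
move=> hi.
have h0 : P.-integrable setT (fun x : R => (cst c0 x)%:E).
  exact: (finite_measure_integrable_cst P c0 measurableT).
have [i1 e1] := intD_mon P _ c1 _ h0 (hi 1%N erefl).
have [i2 e2] := intD_mon P _ c2 _ i1 (hi 2%N erefl).
have [i3 e3] := intD_mon P _ c3 _ i2 (hi 3%N erefl).
have [i4 e4] := intD_mon P _ c4 _ i3 (hi 4%N erefl).
rewrite e4 e3 e2 e1.
have -> : (\int[P]_x (cst c0 x)%:E)%E = c0%:E.
  rewrite (_ : (fun x => (cst c0 x)%:E) = cst c0%:E) //. rewrite integral_cst //. transitivity (c0%:E * 1)%E; [congr (_ * _)%E; exact: probability_setT | by rewrite mule1].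
by rewrite -!EFinD.
Qed.
End Mom.
Lemma sqrtD_le {R : realType} (u v : R) : 0 <= u -> 0 <= v ->
  Num.sqrt (u + v) <= Num.sqrt u + Num.sqrt v.
Proof.
move=> u0 v0.
have h0 : 0 <= Num.sqrt u + Num.sqrt v by rewrite addr_ge0 ?sqrtr_ge0.
rewrite -[X in _ <= X](ger0_norm h0) -sqrtr_sqr; apply: ler_wsqrtr.
rewrite sqrrD !sqr_sqrtr //.
have : 0 <= Num.sqrt u * Num.sqrt v *+ 2 by rewrite mulrn_wge0 // mulr_ge0 ?sqrtr_ge0.
lra.
Qed.

Lemma sqrt_le_sum {R : realType} (u v : R) : 0 <= u -> 0 <= v ->
  Num.sqrt (u * v) <= u + v.
Proof.
move=> u0 v0.
have h0 : 0 <= u + v by rewrite addr_ge0.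
rewrite -[X in _ <= X](ger0_norm h0) -sqrtr_sqr; apply: ler_wsqrtr.
nra.
Qed.

Lemma sqrt_le_1 {R : realType} (u : R) : 0 <= u -> Num.sqrt u <= u + 1.
Proof.
move=> u0; rewrite -{1}(mulr1 u); exact: sqrt_le_sum.
Qed.

Section Off.
Context {R : realType} (sg e3 e4 : R).
Definition os := e3 / sg.
Definition oD := e4 - sg * os ^+ 2.
Definition oP := oD / sg.
Definition oS := Num.sqrt (os ^+ 2 + 4 * oP).
Definition oa := (os + oS) / 2.
Definition ob := (oS - os) / 2.
Definition or := sg / oP.
Definition ow0 := 1 - or.
Definition owa := or * ob / (oa + ob).
Definition owb := or * oa / (oa + ob).

Hypothesis sg0 : 0 < sg.
Hypothesis hD : sg ^+ 2 <= oD.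

Lemma oP_ge : sg <= oP.
Proof. by rewrite /oP ler_pdivlMr // -expr2. Qed.
Lemma oP_gt0 : 0 < oP.
Proof. exact: lt_le_trans sg0 oP_ge. Qed.
Lemma oS2 : oS ^+ 2 = os ^+ 2 + 4 * oP.
Proof. by rewrite /oS sqr_sqrtr // addr_ge0 ?sqr_ge0 // mulr_ge0 // ltW // oP_gt0. Qed.
Lemma oS_ge : `|os| <= oS.
Proof.
rewrite /oS -sqrtr_sqr; apply: ler_wsqrtr; by rewrite lerDl mulr_ge0 // ltW // oP_gt0.
Qed.
Lemma oS_gt0 : 0 < oS.
Proof.
rewrite lt_neqAle sqrtr_ge0 andbT eq_sym /oS sqrtr_eq0 -ltNge.
by rewrite ltr_pwDr ?sqr_ge0 // mulr_gt0 // oP_gt0.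
Qed.
Lemma oa_ge0 : 0 <= oa.
Proof. rewrite /oa; apply: divr_ge0 => //; move: oS_ge; rewrite ler_norml => /andP[]; lra. Qed.
Lemma ob_ge0 : 0 <= ob.
Proof. rewrite /ob; apply: divr_ge0 => //; move: oS_ge; rewrite ler_norml => /andP[]; lra. Qed.
Lemma oab : oa + ob = oS.
Proof. by rewrite /oa /ob; field. Qed.
Lemma oaBb : oa - ob = os.
Proof. by rewrite /oa /ob; field. Qed.
Lemma oaMb : oa * ob = oP.
Proof.
have h : oa * ob = (oS ^+ 2 - os ^+ 2) / 4 by rewrite /oa /ob; field.
by rewrite h oS2; field.
Qed.

Lemma ovalid : valid3 ow0 owa owb.
Proof.
have Sn0 : oa + ob != 0 by rewrite oab gt_eqF // oS_gt0.
have r0 : 0 <= or by rewrite /or; apply: divr_ge0; rewrite ltW // oP_gt0.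
apply/and4P; split.
- by rewrite /ow0 subr_ge0 /or ler_pdivrMr ?oP_gt0 // mul1r; exact: oP_ge.
- by rewrite /owa; apply: divr_ge0; [apply: mulr_ge0 => //; exact: ob_ge0 | apply: addr_ge0; [exact: oa_ge0|exact: ob_ge0]].
- by rewrite /owb; apply: divr_ge0; [apply: mulr_ge0 => //; exact: oa_ge0 | apply: addr_ge0; [exact: oa_ge0|exact: ob_ge0]].
- by apply/eqP; rewrite /ow0 /owa /owb; field; exact: Sn0.
Qed.

Lemma omom (k : nat) : (1 <= k <= 4)%N ->
  owa * oa ^+ k + owb * (- ob) ^+ k =
  (if k == 1%N then 0 else if k == 2%N then sg else if k == 3%N then e3 else e4).
Proof.
have Sn0 : oa + ob != 0 by rewrite oab gt_eqF // oS_gt0.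
have P0 : oP != 0 by rewrite gt_eqF // oP_gt0.
have sgn0 : sg != 0 by rewrite gt_eqF.
have rP : or * oP = sg by rewrite /or divfK.
case/andP => k1 k4.
have [->|k2] := eqVneq k 1%N.
  by rewrite /owa /owb; field; exact: Sn0.
have [->|k3] := eqVneq k 2%N.
  have -> : owa * oa ^+ 2 + owb * (- ob) ^+ 2 = or * (oa * ob).
    by rewrite /owa /owb; field; exact: Sn0.
  by rewrite oaMb rP.
have [->|k5] := eqVneq k 3%N.
  have -> : owa * oa ^+ 3 + owb * (- ob) ^+ 3 = or * (oa * ob) * (oa - ob).
    by rewrite /owa /owb; field; exact: Sn0.
  by rewrite oaMb rP oaBb /os mulrC divfK.
have -> : k = 4%N by move: k1 k4 k2 k3 k5; case: k => [|[|[|[|[|k]]]]].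
have -> : owa * oa ^+ 4 + owb * (- ob) ^+ 4 = or * (oa * ob) * ((oa - ob) ^+ 2 + oa * ob).
  by rewrite /owa /owb; field; exact: Sn0.
rewrite oaMb rP oaBb /=.
by rewrite /oP /oD; field; exact: sgn0.
Qed.

Lemma oa_le : oa <= `|os| + Num.sqrt oP.
Proof.
have hS : oS <= `|os| + 2 * Num.sqrt oP.
  have h4 : 0 <= 4 * oP by rewrite mulr_ge0 // ltW // oP_gt0.
  rewrite /oS; apply: le_trans (sqrtD_le _ _ (sqr_ge0 os) h4) _.
  rewrite sqrtr_sqr sqrtrM // (_ : Num.sqrt 4 = 2) //.
  by rewrite (_ : (4:R) = 2 ^+ 2) ?sqrtr_sqr ?ger0_norm // expr2 -natrM.
have := ler_norm os; rewrite /oa; lra.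
Qed.
Lemma ob_le : ob <= `|os| + Num.sqrt oP.
Proof.
have hS : oS <= `|os| + 2 * Num.sqrt oP.
  have h4 : 0 <= 4 * oP by rewrite mulr_ge0 // ltW // oP_gt0.
  rewrite /oS; apply: le_trans (sqrtD_le _ _ (sqr_ge0 os) h4) _.
  rewrite sqrtr_sqr sqrtrM // (_ : Num.sqrt 4 = 2) //.
  by rewrite (_ : (4:R) = 2 ^+ 2) ?sqrtr_sqr ?ger0_norm // expr2 -natrM.
have := ler_norm (- os); rewrite normrN /ob; lra.
Qed.
End Off.
Section Main.
Context {R : realType}.
Local Open Scope ring_scope.

Lemma pow32 (x : R) : 0 < x -> x `^ (- (3 / 2)) = (x * Num.sqrt x)^-1.
Proof.
move=> x0; rewrite powRN (_ : 3 / 2 = 1 + 2^-1); last by field.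
rewrite powRD; last by rewrite gt_eqF ?implybT.
by rewrite powRr1 ?ltW // powR12_sqrt // ltW.
Qed.

Lemma pow2n (x : R) : 0 <= x -> x `^ (-2) = (x ^+ 2)^-1.
Proof. by move=> x0; rewrite powRN -powR_mulrn. Qed.

Lemma absK4 (x : R) : `|x| ^+ 4 = x ^+ 4.
Proof. by rewrite (_ : 4 = 2 * 2)%N // !exprM real_normK // num_real. Qed.

Lemma xmomE (P : probability R R) (c : R) k : P.-integrable setT (fun x : R => (x ^+ k)%:E) ->
  (\int[P]_x (((c * x) ^+ k)%:E) = (c ^+ k * mom P k)%:E)%E.
Proof.
move=> hk.
under eq_integral do rewrite exprMn EFinM.
by rewrite integralZl // momE // -EFinM.
Qed.

Lemma xmom_pm3 (w0 wa wb a b c : R) k : (0 < k)%N ->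
  (\int[pm3 w0 wa wb a b]_x (((c * x) ^+ k)%:E) =
   (c ^+ k * (WA w0 wa wb * a ^+ k + WB w0 wa wb * (- b) ^+ k))%:E)%E.
Proof.
move=> k0.
have mf : measurable_fun setT (fun x : R => (c * x) ^+ k).
  by apply: measurable_funX; apply: measurable_funM => //; exact: measurable_cst.
rewrite (int_pm3 _ _ _ _ _ _ mf); congr EFin.
by rewrite mulr0 expr0n (negbTE (lt0n_neq0 k0)) mulr0 add0r !exprMn; ring.
Qed.

Lemma W_eq (w0 wa wb : R) : valid3 w0 wa wb ->
  [/\ W0 w0 wa wb = w0, WA w0 wa wb = wa & WB w0 wa wb = wb].
Proof. by move=> h; rewrite /W0 /WA /WB h. Qed.

End Main.
Section Main2.
Context {R : realType}.
Local Open Scope ring_scope.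

Lemma int_x1 (P : probability R R) : P.-integrable setT (fun x : R => x%:E) ->
  P.-integrable setT (fun x : R => (x ^+ 1)%:E).
Proof. by rewrite (_ : (fun x : R => (x ^+ 1)%:E) = (fun x : R => x%:E)) // ; apply/funext => x; rewrite expr1. Qed.

Lemma mom1 (P : probability R R) : (\int[P]_x x%:E = 0)%E -> mom P 1 = 0.
Proof.
move=> h; rewrite /mom (_ : (fun x : R => (x ^+ 1)%:E) = (fun x : R => x%:E)) ?h //.
Qed.

Lemma le_fin_lt (x : \bar R) (y : R) : (x <= y%:E)%E -> (x < +oo)%E.
Proof. by move=> h; apply: le_lt_trans h _; exact: ltry. Qed.

Lemma off_hyp (P : probability R R) (N : nat) (C1 : R) : (1 < N)%N -> 0 < C1 ->
  P.-integrable setT (fun x : R => x%:E) -> (\int[P]_x x%:E = 0)%E ->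
  (\int[P]_x ((`|x| ^+ 2)%:E) = (N%:R^-1)%:E)%E ->
  (\int[P]_x ((`|x| ^+ 3)%:E) <= (C1 * N%:R `^ (- (3 / 2)))%:E)%E ->
  (\int[P]_x ((`|x| ^+ 4)%:E) <= (C1 * ln N%:R * N%:R `^ (-2))%:E)%E ->
  let sg := N%:R^-1 in let e3 := mom P 3 in let e4 := mom P 4 in
  [/\ forall k, (1 <= k <= 4)%N -> P.-integrable setT (fun x : R => (x ^+ k)%:E),
      forall k, (1 <= k <= 4)%N ->
        owa sg e3 e4 * oa sg e3 e4 ^+ k + owb sg e3 e4 * (- ob sg e3 e4) ^+ k = mom P k,
      valid3 (ow0 sg e3 e4) (owa sg e3 e4) (owb sg e3 e4) /\ (mom P 1 = 0 /\ mom P 2 = sg),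
      0 <= oa sg e3 e4 /\ Num.sqrt N%:R * oa sg e3 e4 <= 2 * C1 + ln N%:R &
      0 <= ob sg e3 e4 /\ Num.sqrt N%:R * ob sg e3 e4 <= 2 * C1 + ln N%:R].
Proof.
move=> N1 C1p i1 h1 h2 h3 h4 sg e3 e4.
have N0 : 0 < (N%:R : R) by rewrite ltr0n; apply: ltn_trans N1.
have sg0 : 0 < sg by rewrite invr_gt0.
have lnN0 : 0 <= ln (N%:R : R) by rewrite ltW // ln_gt0 // ltr1n.
have hint : forall k, (1 <= k <= 4)%N -> P.-integrable setT (fun x : R => (x ^+ k)%:E).
  move=> k /andP[k1 k4].
  have [->|k2] := eqVneq k 1%N; first exact: int_x1.
  have [->|k3] := eqVneq k 2%N; first by apply: int_of_abs; rewrite h2 ltry.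
  have [->|k5] := eqVneq k 3%N; first by apply: int_of_abs; exact: le_fin_lt h3.
  have -> : k = 4%N by move: k1 k4 k2 k3 k5; case: k => [|[|[|[|[|k]]]]].
  by apply: int_of_abs; exact: le_fin_lt h4.
have m1 : mom P 1 = 0 by exact: mom1.
have m2 : mom P 2 = sg.
  have e : (\int[P]_x ((x ^+ 2)%:E) = \int[P]_x ((`|x| ^+ 2)%:E))%E.
    by apply: eq_integral => x _; rewrite real_normK // num_real.
  have := momE _ _ (hint 2%N erefl).
  by rewrite e h2 => -[] <-.
have m3 : `|e3| <= C1 * (N%:R * Num.sqrt N%:R)^-1.
  suff : (`|e3|%:E <= (C1 * N%:R `^ (- (3 / 2)))%:E)%E by rewrite lee_fin pow32.
  apply: le_trans h3.
  rewrite /e3 -abse_EFin -momE ?hint //.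
  apply: le_trans (le_abse_integral _ _ _) _ => //; first exact: mX.
  by under eq_integral do rewrite abse_EFin normrX.
have m4 : e4 <= C1 * ln N%:R * (N%:R ^+ 2)^-1.
  suff : (e4%:E <= (C1 * ln N%:R * N%:R `^ (-2))%:E)%E by rewrite lee_fin pow2n // ltW.
  apply: le_trans h4.
  rewrite /e4 -momE ?hint //.
  rewrite (eq_integral (fun x : R => (`|x| ^+ 4)%:E)) //.
  by move=> x _; rewrite absK4.
set s := os sg e3.
have e3E : e3 = s * sg by rewrite /s /os divfK // gt_eqF.
have hD : sg ^+ 2 <= oD sg e3 e4.
  have := int_poly4 P (sg ^+ 2) (2 * s * sg) (s ^+ 2 - 2 * sg) (- (2 * s)) 1 hint.
  rewrite m1 m2 -/e3 -/e4 => hp.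
  have : (0 <= \int[P]_x ((sg ^+ 2 + 2 * s * sg * x ^+ 1 + (s ^+ 2 - 2 * sg) * x ^+ 2 +
           - (2 * s) * x ^+ 3 + 1 * x ^+ 4)%:E))%E.
    apply: integral_ge0 => x _; rewrite lee_fin.
    have -> : sg ^+ 2 + 2 * s * sg * x ^+ 1 + (s ^+ 2 - 2 * sg) * x ^+ 2 +
           - (2 * s) * x ^+ 3 + 1 * x ^+ 4 = (x ^+ 2 - s * x - sg) ^+ 2 by ring.
    exact: sqr_ge0.
  rewrite hp lee_fin /oD -/s {1}e3E.
  have -> : sg ^+ 2 + 2 * s * sg * 0 + (s ^+ 2 - 2 * sg) * sg + - (2 * s) * (s * sg) + 1 * e4
     = e4 - sg * s ^+ 2 - sg ^+ 2 by ring.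
  by rewrite subr_ge0.
have sN0 : 0 < Num.sqrt (N%:R : R) by rewrite sqrtr_gt0.
have hNs : 0 < (N%:R : R) * Num.sqrt N%:R by rewrite mulr_gt0.
have hs : Num.sqrt N%:R * `|s| <= C1.
  rewrite ler_pdivlMr // in m3.
  rewrite /s /os /sg invrK normrM (ger0_norm (ltW N0)).
  by rewrite (_ : _ * _ = `|e3| * (N%:R * Num.sqrt N%:R)) //; ring.
have hP : Num.sqrt N%:R * Num.sqrt (oP sg e3 e4) <= C1 + ln N%:R.
  rewrite -sqrtrM; last by rewrite ler0n.
  apply: (@le_trans _ _ (Num.sqrt (C1 * ln N%:R))); last by apply: sqrt_le_sum => //; exact: ltW.
  apply: ler_wsqrtr.
  rewrite ler_pdivlMr ?exprn_gt0 // in m4.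
  rewrite /oP /oD -/s /sg invrK.
  have : 0 <= N%:R^-1 * s ^+ 2 by rewrite mulr_ge0 ?sqr_ge0 // invr_ge0 ltW.
  have : 0 <= (N%:R : R) ^+ 2 by rewrite sqr_ge0.
  by rewrite -/e4; nra.
have hab : forall t : R, t <= `|s| + Num.sqrt (oP sg e3 e4) ->
    Num.sqrt N%:R * t <= 2 * C1 + ln N%:R.
  move=> t ht; apply: le_trans (ler_wpM2l (ltW sN0) ht) _.
  by rewrite mulrDr; lra.
split => //.
- move=> k hk; rewrite (@omom _ sg e3 e4 sg0 hD k hk).
  move: hk => /andP[k1 k4].
  have [->|k2] := eqVneq k 1%N; first by rewrite m1.
  have [->|k3] := eqVneq k 2%N; first by rewrite m2.
  have [->|k5] := eqVneq k 3%N; first by [].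
  by have -> : k = 4%N by move: k1 k4 k2 k3 k5; case: k => [|[|[|[|[|k]]]]].
- by split; [exact: ovalid | split].
- split; first exact: (@oa_ge0 _ sg e3 e4 sg0 hD).
  by apply: hab; exact: (@oa_le _ sg e3 e4 sg0 hD).
- split; first exact: (@ob_ge0 _ sg e3 e4 sg0 hD).
  by apply: hab; exact: (@ob_le _ sg e3 e4 sg0 hD).
Qed.
End Main2.
Section Main3.
Context {R : realType}.
Local Open Scope ring_scope.

Lemma pm3_integrable (w0 wa wb a b : R) (f : R -> R) : measurable_fun setT f ->
  (pm3 w0 wa wb a b).-integrable setT (fun x => (f x)%:E).
Proof.
move=> mf; apply/integrableP; split; first exact/measurable_EFinP.
under eq_integral do rewrite abse_EFin.
rewrite (int_pm3 _ _ _ _ _ (fun x => `|f x|)) ?ltry //.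
by apply: measurableT_comp; [exact: normr_measurable | exact: mf].
Qed.

Lemma pm3_mom (w0 wa wb a b : R) k : (0 < k)%N -> valid3 w0 wa wb ->
  (\int[pm3 w0 wa wb a b]_x ((x ^+ k)%:E) = (wa * a ^+ k + wb * (- b) ^+ k)%:E)%E.
Proof.
move=> k0 v.
have mf : measurable_fun setT (fun x : R => x ^+ k) by apply: measurable_funX.
rewrite (int_pm3 _ _ _ _ _ _ mf); congr EFin.
have [_ -> ->] := W_eq _ _ _ v.
by rewrite expr0n (negbTE (lt0n_neq0 k0)) mulr0 add0r.
Qed.

Lemma pm3_support (w0 wa wb a b B : R) : 0 <= B -> `|a| <= B -> `|b| <= B ->
  pm3 w0 wa wb a b [set x | `|x| <= B] = 1%E.
Proof.
move=> B0 ha hb.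
have m0 : (0 : R) \in [set x : R | `|x| <= B] by rewrite mem_set //= normr0.
have ma : a \in [set x : R | `|x| <= B] by rewrite mem_set.
have mb : (- b) \in [set x : R | `|x| <= B] by rewrite mem_set //= normrN.
by rewrite pm3E !diracE m0 ma mb !mule1 -!EFinD addrA W_sum.
Qed.

Definition Kc (C1 : R) := (2 * C1 + 1) / ln 2 + (2 * C1 + 1) + 1.
Definition qf (C1 : R) (N : nat) : R :=
  if (1 < N)%N then Num.sqrt N%:R / (Kc C1 * ln N%:R) else (Kc C1)^-1.

Lemma ln2_gt0 : 0 < ln (2 : R). Proof. by rewrite ln_gt0 // ltr1n. Qed.

Lemma Kc_gt0 (C1 : R) : 0 <= C1 -> 0 < Kc C1.
Proof.
move=> C0; rewrite /Kc; have := ln2_gt0 => l2.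
have : 0 <= (2 * C1 + 1) / ln 2 by rewrite divr_ge0 // ?ltW //; lra.
lra.
Qed.

Lemma qf_pos (C1 : R) N : 0 <= C1 -> 0 < qf C1 N /\ (Kc C1)^-1 * Num.sqrt N%:R / ln N%:R <= qf C1 N.
Proof.
move=> C0; have K0 := Kc_gt0 _ C0.
rewrite /qf; case: ifP => N1.
  have lnN : 0 < ln (N%:R : R) by rewrite ln_gt0 // ltr1n.
  have sN : 0 < Num.sqrt (N%:R : R) by rewrite sqrtr_gt0 ltr0n; apply: ltn_trans N1.
  split; first by rewrite divr_gt0 // mulr_gt0.
  by rewrite le_eqVlt; apply/orP; left; apply/eqP; field; rewrite ?gt_eqF.
split; first by rewrite invr_gt0.
have [->|N1'] := eqVneq N 0%N; first by rewrite sqrtr0 mulr0 mul0r ltW // invr_gt0.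
have -> : N = 1%N by move: N1 N1'; case: N => [|[|n]].
by rewrite ln1 invr0 mulr0 ltW // invr_gt0.
Qed.

Lemma atom_bound (C1 : R) N (t : R) : 0 <= C1 -> (0 < N)%N -> 0 <= t ->
  Num.sqrt N%:R * t <= 2 * C1 + 1 + ln N%:R -> `|t| <= (qf C1 N)^-1.
Proof.
move=> C0 N0 t0 h; rewrite ger0_norm //; have K0 := Kc_gt0 _ C0.
rewrite /qf; case: ifP => N1; last first.
  have eN : N = 1%N by apply/eqP; rewrite eqn_leq leqNgt N1 N0.
  subst N; move: h; rewrite sqrtr1 mul1r ln1 addr0 invrK /Kc => h.
  have : 0 <= (2 * C1 + 1) / ln 2 by rewrite divr_ge0 // ?ltW ?ln2_gt0 //; lra.
  lra.
have lnN : 0 < ln (N%:R : R) by rewrite ln_gt0 // ltr1n.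
have sN : 0 < Num.sqrt (N%:R : R) by rewrite sqrtr_gt0 ltr0n.
rewrite invf_div ler_pdivlMr // mulrC.
apply: le_trans h _.
have l2 : ln (2 : R) <= ln N%:R.
  by rewrite ler_ln ?ler_nat // posrE ltr0n //; apply: ltn_trans N1.
have h1 : 2 * C1 + 1 <= (2 * C1 + 1) / ln 2 * ln N%:R.
  have hp : 0 <= 2 * C1 + 1 by lra.
  rewrite -mulrA ler_peMr //.
  by rewrite mulrC ler_pdivlMr ?ln2_gt0 // mul1r.
rewrite /Kc mulrDl mulrDl.
have : ln (N%:R : R) <= (2 * C1 + 1) * ln N%:R + 1 * ln N%:R.
  have : 0 <= (2 * C1 + 1) * ln (N%:R : R) by rewrite mulr_ge0 ?ltW //; lra.
  lra.
lra.
Qed.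
End Main3.
Definition dLaw {R : realType} (P : probability R R) : probability R R :=
  pm3 0 2^-1 2^-1 (Num.sqrt (mom P 2)) (Num.sqrt (mom P 2)).
Definition oLaw {R : realType} (P : probability R R) (N : nat) : probability R R :=
  pm3 (ow0 N%:R^-1 (mom P 3) (mom P 4)) (owa N%:R^-1 (mom P 3) (mom P 4))
      (owb N%:R^-1 (mom P 3) (mom P 4)) (oa N%:R^-1 (mom P 3) (mom P 4))
      (ob N%:R^-1 (mom P 3) (mom P 4)).
Definition newLaws {R : realType} (mu : entry_laws R) : entry_laws R :=
  fun N i j => if i == j then dLaw (mu N i j) else oLaw (mu N i j) N.

Lemma dvalid {R : realType} : valid3 (0 : R) 2^-1 2^-1.
Proof. by apply/and4P; split => //; apply/eqP; field. Qed.

Lemma dmom {R : realType} (d : R) k : (1 <= k <= 2)%N -> 0 <= d ->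
  2^-1 * Num.sqrt d ^+ k + 2^-1 * (- Num.sqrt d) ^+ k = (if k == 1%N then 0 else d).
Proof.
case/andP => k1 k2 d0.
have [->|k1'] := eqVneq k 1%N; first by rewrite !expr1; field.
have -> : k = 2%N by move: k1 k2 k1'; case: k => [|[|[|k]]].
by rewrite sqrrN sqr_sqrtr //; field.
Qed.

Lemma diag_hyp {R : realType} (P : probability R R) (N : nat) (C1 : R) : (0 < N)%N -> 0 < C1 ->
  P.-integrable setT (fun x : R => x%:E) -> (\int[P]_x x%:E = 0)%E ->
  (\int[P]_x ((`|x| ^+ 2)%:E) <= (C1 / N%:R)%:E)%E ->
  [/\ forall k, (1 <= k <= 2)%N -> P.-integrable setT (fun x : R => (x ^+ k)%:E),
      mom P 1 = 0, 0 <= mom P 2, mom P 2 <= C1 / N%:R &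
      Num.sqrt N%:R * Num.sqrt (mom P 2) <= 2 * C1 + 1 + ln N%:R].
Proof.
move=> N0 C1p i1 h1 h2.
have N0' : 0 < (N%:R : R) by rewrite ltr0n.
have hint : forall k, (1 <= k <= 2)%N -> P.-integrable setT (fun x : R => (x ^+ k)%:E).
  move=> k /andP[k1 k2].
  have [->|k1'] := eqVneq k 1%N; first exact: int_x1.
  have -> : k = 2%N by move: k1 k2 k1'; case: k => [|[|[|k]]].
  by apply: int_of_abs; exact: le_fin_lt h2.
have m2ge : 0 <= mom P 2.
  by rewrite /mom fine_ge0 // integral_ge0 // => x _; rewrite lee_fin sqr_ge0.
have m2le : mom P 2 <= C1 / N%:R.
  rewrite -lee_fin -momE ?hint //; apply: le_trans h2.
  rewrite (eq_integral (fun x : R => (`|x| ^+ 2)%:E)) //.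
  by move=> x _; rewrite real_normK // num_real.
split => //; first exact: mom1.
rewrite -sqrtrM ?ler0n //.
apply: (@le_trans _ _ (C1 + 1)).
  apply: le_trans (sqrt_le_1 _ (ltW C1p)); apply: ler_wsqrtr.
  by rewrite mulrC -ler_pdivlMr.
have : 0 <= ln (N%:R : R).
  have [->|N1] := eqVneq N 1%N; first by rewrite ln1.
  by rewrite ltW // ln_gt0 // ltr1n ltn_neqAle eq_sym N1.
lra.
Qed.

Section LawLemmas.
Context {R : realType}.
Local Open Scope ring_scope.
Variables (P : probability R R) (N : nat).
Let sg : R := N%:R^-1.
Let e3 := mom P 3.
Let e4 := mom P 4.

Lemma oLaw_mom k : (0 < k)%N -> valid3 (ow0 sg e3 e4) (owa sg e3 e4) (owb sg e3 e4) ->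
  (\int[oLaw P N]_x ((x ^+ k)%:E) =
   (owa sg e3 e4 * oa sg e3 e4 ^+ k + owb sg e3 e4 * (- ob sg e3 e4) ^+ k)%:E)%E.
Proof. by move=> k0 v; exact: pm3_mom. Qed.

Lemma oLaw_xmom (c : R) k : (0 < k)%N -> valid3 (ow0 sg e3 e4) (owa sg e3 e4) (owb sg e3 e4) ->
  (\int[oLaw P N]_x (((c * x) ^+ k)%:E) =
   (c ^+ k * (owa sg e3 e4 * oa sg e3 e4 ^+ k + owb sg e3 e4 * (- ob sg e3 e4) ^+ k))%:E)%E.
Proof.
move=> k0 v; have -> : oLaw P N = pm3 (ow0 sg e3 e4) (owa sg e3 e4) (owb sg e3 e4)
  (oa sg e3 e4) (ob sg e3 e4) by [].
by rewrite xmom_pm3 //; have [_ -> ->] := W_eq _ _ _ v.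
Qed.

Lemma oLaw_supp B : 0 <= B -> `|oa sg e3 e4| <= B -> `|ob sg e3 e4| <= B ->
  oLaw P N [set x | `|x| <= B] = 1%E.
Proof. exact: pm3_support. Qed.

Let d := Num.sqrt (mom P 2).

Lemma dLaw_mom k : (0 < k)%N ->
  (\int[dLaw P]_x ((x ^+ k)%:E) = (2^-1 * d ^+ k + 2^-1 * (- d) ^+ k)%:E)%E.
Proof. by move=> k0; apply: pm3_mom => //; exact: dvalid. Qed.

Lemma dLaw_xmom (c : R) k : (0 < k)%N ->
  (\int[dLaw P]_x (((c * x) ^+ k)%:E) = (c ^+ k * (2^-1 * d ^+ k + 2^-1 * (- d) ^+ k))%:E)%E.
Proof.
move=> k0; have -> : dLaw P = pm3 0 2^-1 2^-1 d d by [].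
by rewrite xmom_pm3 //; have [_ -> ->] := W_eq _ _ _ (@dvalid R).
Qed.

Lemma dLaw_supp B : 0 <= B -> `|d| <= B -> dLaw P [set x | `|x| <= B] = 1%E.
Proof. by move=> B0 h; exact: pm3_support. Qed.
End LawLemmas.
Local Open Scope ring_scope.

Theorem mainTheorem7 (R : realType) (mu : entry_laws R) :
  gen_wigner mu ->
  (exists C1 : R, 0 < C1 /\
     forall N (i j : 'I_N),
       ((\int[mu N i i]_x ((`|x| ^+ 2)%:E) <= (C1 / N%:R)%:E)%E) /\
       ((i < j)%N ->
          (\int[mu N i j]_x ((`|x| ^+ 2)%:E) = (N%:R^-1)%:E)%E /\
          (\int[mu N i j]_x ((`|x| ^+ 3)%:E) <= (C1 * N%:R `^ (- (3 / 2)))%:E)%E /\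
          (\int[mu N i j]_x ((`|x| ^+ 4)%:E) <= (C1 * ln N%:R * N%:R `^ (-2))%:E)%E)) ->
  (exists phi : R, 0 < phi /\ bounded_support mu (fun N => N%:R `^ phi)) ->
  exists mu' : entry_laws R,
    gen_wigner mu' /\
    (exists (c : R) (q : nat -> R), 0 < c /\
       (forall N, 0 < q N /\ c * Num.sqrt N%:R / ln N%:R <= q N) /\
       bounded_support mu' q) /\
    (forall N (i j : 'I_N), i != j ->
       forall k, (1 <= k <= 4)%N -> xmoment mu i j k = xmoment mu' i j k) /\
    (forall N (i : 'I_N) k, (1 <= k <= 2)%N -> xmoment mu i i k = xmoment mu' i i k).
Proof.
move=> [msym [C0 [C00 hw]]] [C1 [C1p hC]] _.
have offF : forall N (i j : 'I_N), i != j ->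
  let P := mu N i j in let sg := N%:R^-1 in let e3 := mom P 3 in let e4 := mom P 4 in
  [/\ forall k, (1 <= k <= 4)%N -> P.-integrable setT (fun x : R => (x ^+ k)%:E),
      forall k, (1 <= k <= 4)%N ->
        owa sg e3 e4 * oa sg e3 e4 ^+ k + owb sg e3 e4 * (- ob sg e3 e4) ^+ k = mom P k,
      valid3 (ow0 sg e3 e4) (owa sg e3 e4) (owb sg e3 e4) /\ (mom P 1 = 0 /\ mom P 2 = sg),
      0 <= oa sg e3 e4 /\ Num.sqrt N%:R * oa sg e3 e4 <= 2 * C1 + ln N%:R &
      0 <= ob sg e3 e4 /\ Num.sqrt N%:R * ob sg e3 e4 <= 2 * C1 + ln N%:R].
  move=> N i j ij.
  suff H : forall (i j : 'I_N), (i < j)%N ->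
    let P := mu N i j in let sg := N%:R^-1 in let e3 := mom P 3 in let e4 := mom P 4 in
    [/\ forall k, (1 <= k <= 4)%N -> P.-integrable setT (fun x : R => (x ^+ k)%:E),
      forall k, (1 <= k <= 4)%N ->
        owa sg e3 e4 * oa sg e3 e4 ^+ k + owb sg e3 e4 * (- ob sg e3 e4) ^+ k = mom P k,
      valid3 (ow0 sg e3 e4) (owa sg e3 e4) (owb sg e3 e4) /\ (mom P 1 = 0 /\ mom P 2 = sg),
      0 <= oa sg e3 e4 /\ Num.sqrt N%:R * oa sg e3 e4 <= 2 * C1 + ln N%:R &
      0 <= ob sg e3 e4 /\ Num.sqrt N%:R * ob sg e3 e4 <= 2 * C1 + ln N%:R].
    have [lt|gt|eq] := ltngtP i j; first exact: H.
      by rewrite msym; exact: H.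
    by move: ij; rewrite (val_inj eq) eqxx.
  move=> i' j' lt.
  have N1 : (1 < N)%N by apply: leq_ltn_trans (ltn_ord j'); exact: leq_ltn_trans lt.
  have [_ hlt] := hC N i' j'; have [h2 [h3 h4]] := hlt lt.
  have [i1 [h1 _]] := hw N i' j'.
  exact: off_hyp.
have diagF : forall N (i : 'I_N),
  [/\ forall k, (1 <= k <= 2)%N -> (mu N i i).-integrable setT (fun x : R => (x ^+ k)%:E),
      mom (mu N i i) 1 = 0, 0 <= mom (mu N i i) 2, mom (mu N i i) 2 <= C1 / N%:R &
      Num.sqrt N%:R * Num.sqrt (mom (mu N i i) 2) <= 2 * C1 + 1 + ln N%:R].
  move=> N i.
  have N0 : (0 < N)%N by apply: leq_ltn_trans (ltn_ord i).
  have [hd _] := hC N i i.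
  have [i1 [h1 _]] := hw N i i.
  exact: diag_hyp.
exists (newLaws mu); split.
  split.
    by move=> N i j; rewrite /newLaws [j == i]eq_sym msym.
  exists (C1 + 1); split; first by rewrite addr_ge0 // ltW.
  move=> N i j.
  have N0' : 0 < (N%:R : R) by rewrite ltr0n; apply: leq_ltn_trans (ltn_ord i).
  rewrite /newLaws; have [<-|ij] := eqVneq i j.
    have [_ m1 m2ge m2le _] := diagF N i.
    split; first exact: pm3_integrable.
    split.
      rewrite (_ : (fun x : R => x%:E) = (fun x : R => (x ^+ 1)%:E)) //.
      by rewrite dLaw_mom // dmom.
    rewrite dLaw_mom // dmom //= mulr1 lee_fin.
    have hN : 0 <= N%:R^-1 :> R by rewrite invr_ge0 ltW.
    rewrite mulrDl mul1r ler_norml; apply/andP; split; lra.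
  have [_ hm [hv [m1 m2]] _ _] := offF N i j ij.
  split; first exact: pm3_integrable.
  split.
    rewrite (_ : (fun x : R => x%:E) = (fun x : R => (x ^+ 1)%:E)) //.
    by rewrite oLaw_mom // hm // m1.
  by rewrite oLaw_mom // hm // m2 -EFinB subrr abse0 mulr0.
have C10 : 0 <= C1 by exact: ltW.
split.
  exists (Kc C1)^-1, (qf C1); split; first by rewrite invr_gt0 Kc_gt0.
  split; first by move=> N; exact: qf_pos.
  exists 1; split => // N i j.
  have N0 : (0 < N)%N by apply: leq_ltn_trans (ltn_ord i).
  have qinv0 : 0 <= (qf C1 N)^-1 by rewrite invr_ge0 ltW //; case: (qf_pos C1 N C10).
  suff -> : newLaws mu N i j [set x | `|x| <= (qf C1 N)^-1] = 1%E.
    by rewrite lee_fin lerBlDr lerDl expR_ge0.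
  rewrite /newLaws; have [<-|ij] := eqVneq i j.
    have [_ _ m2ge _ hb] := diagF N i.
    by apply: dLaw_supp => //; apply: atom_bound => //; exact: sqrtr_ge0.
  have [_ _ _ [a0 ha] [b0 hb]] := offF N i j ij.
  have [_ _ [hv _] _ _] := offF N i j ij.
  have N1 : (1 < N)%N.
    move: ij; apply: contraNT; rewrite -leqNgt => N1; apply/eqP/ord_inj.
    by have := ltn_ord i; have := ltn_ord j; lia.
  have l0 : 0 <= ln (N%:R : R) by rewrite ltW // ln_gt0 // ltr1n.
  apply: oLaw_supp => //; apply: atom_bound => //.
  - lra.
  - lra.
split.
  move=> N i j ij k hk.
  have [hint hm [hv _] _ _] := offF N i j ij.
  have k0 : (0 < k)%N by case/andP: hk.
  rewrite /xmoment.
  have -> : newLaws mu N i j = oLaw (mu N i j) N by rewrite /newLaws (negbTE ij).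
  by rewrite oLaw_xmom // hm // xmomE // hint.
move=> N i k hk.
have [hint m1 m2ge _ _] := diagF N i.
have k0 : (0 < k)%N by case/andP: hk.
rewrite /xmoment.
have -> : newLaws mu N i i = dLaw (mu N i i) by rewrite /newLaws eqxx.
rewrite dLaw_xmom // dmom // xmomE ?hint //.
move: hk => /andP[k1 k2].
have [->|k1'] := eqVneq k 1%N; first by rewrite m1.
by have -> : k = 2%N by apply/eqP; rewrite eqn_leq k2 ltn_neqAle eq_sym k1' k1.
Qed.
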